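(* Let $\alpha \in \mathbb{R}_{>0}$ and $M_\alpha = \{f(\alpha) \mid f(x) \in \mathbb{N}_0[x,x^{-1}]\}$ as an additive monoid. The following are equivalent: (a) $M_\alpha$ is a UFM; (b) $M_\alpha$ is an HFM; (c) $\alpha = 1$ or $\alpha$ is transcendental.
   Context: $\mathbb{N}_0[x,x^{-1}]$ denotes the semiring of Laurent polynomials with coefficients in $\mathbb{N}_0$. For an atomic reduced additive monoid $M$ and nonzero $x\in M$, $\mathsf{Z}(x)$ denotes the set of factorizations of $x$ (formal sums of atoms, up to order, adding to $x$) and $\mathsf{L}(x)$ the set of their lengths. $M$ is a UFM (unique factorization monoid) if it is atomic and $|\mathsf{Z}(x)| = 1$ for all nonzero $x$, and an HFM (half-factorial monoid) if it is atomic and $|\mathsf{L}(x)| = 1$ for all nonzero $x$. *)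

(* Defs.v *)
From HB Require Import structures.
From mathcomp Require Import all_boot all_order all_algebra.
From mathcomp Require Import reals.
Set Implicit Arguments. Unset Strict Implicit. Unset Printing Implicit Defensive.
Import Order.TTheory GRing.Theory Num.Theory.
Local Open Scope ring_scope.

Section Defs.
Variable R : realType.

(* M_alpha = { f(alpha) | f in N0[x,x^-1] }.  Every Laurent polynomial with
   coefficients in N0 is x^(-n) * p(x) for some n : nat and p : {poly nat}. *)
Definition M_alpha (a : R) (x : R) : Prop :=
  exists (n : nat) (p : {poly nat}),
    x = a ^- n * (map_poly (fun k : nat => k%:R : R) p).[a].

Definition is_atom (M : R -> Prop) (u : R) : Prop :=
  [/\ M u, u != 0 &
      forall y z, M y -> M z -> u = y + z -> y = 0 \/ z = 0].

(* A factorization of x: a finite formal sum of atoms (a sequence of atoms,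
   considered up to order) adding up to x. *)
Definition is_factorization (M : R -> Prop) (x : R) (s : seq R) : Prop :=
  (forall u, u \in s -> is_atom M u) /\ \sum_(u <- s) u = x.

Definition atomic (M : R -> Prop) : Prop :=
  forall x, M x -> x != 0 -> exists s, is_factorization M x s.

Definition UFM (M : R -> Prop) : Prop :=
  atomic M /\
  forall x s t, M x -> x != 0 ->
    is_factorization M x s -> is_factorization M x t -> perm_eq s t.

Definition HFM (M : R -> Prop) : Prop :=
  atomic M /\
  forall x s t, M x -> x != 0 ->
    is_factorization M x s -> is_factorization M x t -> size s = size t.

Definition algebraic (a : R) : Prop :=
  exists p : {poly rat}, p != 0 /\ root (map_poly (@ratr R) p) a.

Definition transcendental (a : R) : Prop := ~ algebraic a.

End Defs.

(* Main.v *)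
Require Import Defs.
From HB Require Import structures.
From mathcomp Require Import all_boot all_order all_algebra.
From mathcomp Require Import reals.
From mathcomp Require Import ring lra zify.
From Stdlib Require Import FunctionalExtensionality PropExtensionality.
Import Order.TTheory GRing.Theory Num.Theory.
Local Open Scope ring_scope.

Section Aux.
Variable R : realType.
Variable a : R.
Hypothesis ha : 0 < a.

Let a0 : a != 0. Proof. by rewrite gt_eqF. Qed.

Definition L (x : R) : Prop :=
  exists (n : nat) (es : seq nat), x = a ^- n * \sum_(e <- es) a ^+ e.

Lemma sum_nseq (k e : nat) : \sum_(i <- nseq k e) a ^+ i = k%:R * a ^+ e.
Proof.
elim: k => [|k IH]; first by rewrite big_nil mul0r.
by rewrite /= big_cons IH mulrS mulrDl mul1r.
Qed.

Lemma sum_mapS (es : seq nat) : \sum_(i <- map S es) a ^+ i = (\sum_(i <- es) a ^+ i) * a.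
Proof. by rewrite big_map mulr_suml; apply: eq_bigr => i _; rewrite exprSr. Qed.

Lemma ML x : M_alpha a x <-> L x.
Proof.
split.
  case=> n [p ->]; exists n.
  suff [es ->] : exists es : seq nat,
     (map_poly (fun k : nat => k%:R : R) p).[a] = \sum_(e <- es) a ^+ e by exists es.
  elim/poly_ind: p => [|p c [es IH]].
    by exists [::]; rewrite rmorph0 horner0 big_nil.
  exists (map S es ++ nseq c 0%N).
  rewrite rmorphD rmorphM /= map_polyX map_polyC /= hornerMXaddC IH.
  by rewrite big_cat /= sum_mapS sum_nseq expr0 mulr1.
case=> n [es ->]; exists n, (\sum_(e <- es) 'X^e).
rewrite rmorph_sum horner_sum; congr (_ * _); apply: eq_bigr => e _.
by rewrite rmorphXn /= map_polyX hornerXn.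
Qed.

Lemma ML_eq : M_alpha a = L.
Proof.
by apply: functional_extensionality => x; apply: propositional_extensionality; exact: ML.
Qed.

Lemma sum_ge0 (es : seq nat) : 0 <= \sum_(e <- es) a ^+ e.
Proof. by apply: sumr_ge0 => i _; rewrite exprn_ge0 // ltW. Qed.

Lemma sum_eq0 (es : seq nat) : \sum_(e <- es) a ^+ e = 0 -> es = [::].
Proof.
case: es => // e es; rewrite big_cons => H; exfalso.
have : 0 < a ^+ e + \sum_(e <- es) a ^+ e.
  by apply: ltr_wpDr; [exact: sum_ge0 | exact: exprn_gt0].
by rewrite H ltxx.
Qed.

Lemma Lpow n m : L (a ^- n * a ^+ m).
Proof. by exists n, [:: m]; rewrite big_seq1. Qed.

Lemma Lscale p q y : L y -> L (a ^- p * a ^+ q * y).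
Proof.
case=> n [es ->]; exists (n + p)%N, (map (addn q) es).
rewrite big_map exprD invfM.
have -> : \sum_(i <- es) a ^+ (q + i) = a ^+ q * \sum_(i <- es) a ^+ i.
  by rewrite mulr_sumr; apply: eq_bigr => i _; rewrite exprD.
ring.
Qed.

Lemma expVK n : a ^- n * a ^+ n = 1.
Proof. by rewrite mulVf // expf_neq0. Qed.

Lemma atom_form u : is_atom L u -> exists n m, u = a ^- n * a ^+ m.
Proof.
case=> [[n [es Hu]] u0 Hsplit].
case: es Hu => [|e es] Hu; first by move: u0; rewrite Hu big_nil mulr0 eqxx.
case: es Hu => [|e' es] Hu; first by exists n, e; rewrite Hu big_seq1.
exfalso.
have := Hsplit (a ^- n * a ^+ e) (a ^- n * \sum_(i <- e' :: es) a ^+ i)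
  (Lpow n e) (ex_intro _ n (ex_intro _ _ erefl)).
rewrite Hu big_cons mulrDr => /(_ erefl) [] /eqP; rewrite mulf_eq0 invr_eq0 !expf_eq0 (negbTE a0) ?andbF //=.
move/eqP/sum_eq0.
done.
Qed.


Lemma atom_scale p q u : is_atom L u -> is_atom L (a ^- p * a ^+ q * u).
Proof.
case=> [Lu u0 Hs]; split; first exact: Lscale.
  by rewrite !mulf_neq0 ?invr_eq0 ?expf_neq0.
move=> y z Ly Lz Huyz.
have Hu : u = a ^- q * a ^+ p * y + a ^- q * a ^+ p * z.
  rewrite -mulrDr -Huyz !mulrA.
  have -> : a ^- q * a ^+ p * a ^- p * a ^+ q = (a ^- q * a ^+ q) * (a ^- p * a ^+ p) by ring.
  by rewrite !expVK !mul1r.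
have nz : a ^- q * a ^+ p != 0 by rewrite mulf_neq0 ?invr_eq0 ?expf_neq0.
case: (Hs _ _ (Lscale q p _ Ly) (Lscale q p _ Lz) Hu) => /eqP; rewrite mulf_eq0 (negbTE nz) /= => /eqP ->;
  by [left | right].
Qed.

Definition g (N e : nat) := a ^- N * a ^+ e.

Lemma g_shift N d es : map (g N) es = map (g (N + d)) (map (addn d) es).
Proof.
rewrite -map_comp; apply: eq_map => e /=; rewrite /g exprD invfM exprD.
have := expVK d; move=> H.
transitivity (a ^- N * a ^+ e * (a ^- d * a ^+ d)); first by rewrite H mulr1.
ring.
Qed.

Lemma rep (s : seq R) : (forall u, u \in s -> exists n m, u = a ^- n * a ^+ m) ->
  exists N es, s = map (g N) es.
Proof.
elim: s => [|u s IH] H; first by exists 0%N, [::].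
have [N [es ->]] : exists N es, s = map (g N) es.
  by apply: IH => v vs; apply: H; rewrite inE vs orbT.
have [n [m ->]] := H u (mem_head _ _).
exists (N + n)%N, ((m + N)%N :: map (addn n) es).
rewrite /= -g_shift; congr (_ :: _).
rewrite /g !exprD !invfM.
have := expVK N; move=> HN.
transitivity (a ^- n * a ^+ m * (a ^- N * a ^+ N)); first by rewrite HN mulr1.
ring.
Qed.

Lemma sum_g N es : \sum_(u <- map (g N) es) u = a ^- N * \sum_(e <- es) a ^+ e.
Proof. by rewrite big_map mulr_sumr. Qed.

Lemma count_sum (es : seq nat) i :
  \sum_(e <- es) ((i == e)%:R : rat) = (count_mem i es)%:R.
Proof.
elim: es => [|e es IH]; first by rewrite big_nil.
by rewrite big_cons IH /= natrD eq_sym.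
Qed.

Lemma key (es ft : seq nat) : transcendental a ->
  \sum_(e <- es) a ^+ e = \sum_(e <- ft) a ^+ e -> perm_eq es ft.
Proof.
move=> tr Hs.
pose P : {poly rat} := \sum_(e <- es) 'X^e.
pose Q : {poly rat} := \sum_(e <- ft) 'X^e.
have PQ : P = Q.
  apply/eqP; rewrite -subr_eq0; apply/negPn/negP => nz; apply: tr.
  exists (P - Q); split => //.
  rewrite /root rmorphB /= !rmorph_sum hornerD hornerN !horner_sum.
  rewrite (eq_bigr (fun e => a ^+ e)); last by move=> e _; rewrite rmorphXn /= map_polyX hornerXn.
  rewrite [X in _ - X](eq_bigr (fun e => a ^+ e)); last by move=> e _; rewrite rmorphXn /= map_polyX hornerXn.
  by rewrite Hs subrr.
rewrite /perm_eq; apply/allP => i _ /=.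
have := congr1 (fun p : {poly rat} => p`_i) PQ.
rewrite /P /Q !coef_sum.
rewrite (eq_bigr (fun e => ((i == e)%:R : rat))); last by move=> e _; rewrite coefXn.
rewrite [X in _ = X](eq_bigr (fun e => ((i == e)%:R : rat))); last by move=> e _; rewrite coefXn.
by rewrite !count_sum => /eqP; rewrite eqr_nat.
Qed.


Lemma int_split (z : {poly int}) : exists es ft : seq nat,
  \sum_(e <- es) a ^+ e - \sum_(e <- ft) a ^+ e = (map_poly (intr : int -> R) z).[a]
  /\ (size es)%:Z - (size ft)%:Z = z.[1].
Proof.
elim/poly_ind: z => [|p c [es [ft [H1 H2]]]].
  by exists [::], [::]; rewrite !big_nil rmorph0 !horner0 !subrr.
rewrite rmorphD rmorphM /= map_polyX map_polyC /= hornerMXaddC hornerMXaddC mulr1 -H1 -H2.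
case: c => k.
  exists (map S es ++ nseq k 0%N), (map S ft); split.
    rewrite big_cat /= !sum_mapS sum_nseq expr0 mulr1.
    have -> : ((Posz k)%:~R : R) = k%:R by [].
    ring.
  rewrite size_cat !size_map size_nseq. lia.
exists (map S es), (map S ft ++ nseq k.+1 0%N); split.
  rewrite big_cat (sum_nseq k.+1) !sum_mapS expr0 mulr1 NegzE mulrNz.
  have -> : ((Posz k.+1)%:~R : R) = k.+1%:R by [].
  rewrite /=. ring.
rewrite size_cat !size_map size_nseq NegzE. lia.
Qed.

Lemma reduce (a1 : a != 1) n : forall z : {poly int}, (size z <= n)%N -> z != 0 ->
  root (map_poly (intr : int -> R) z) a ->
  exists w : {poly int}, w != 0 /\ root (map_poly (intr : int -> R) w) a /\ ~~ root w 1.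
Proof.
elim: n => [|n IH] z.
  by rewrite leqn0 size_poly_eq0 => /eqP -> ; rewrite eqxx.
move=> Hs nz rz.
have [r1|nr1] := boolP (root z 1); last by exists z.
have [q Hq] := factor_theorem _ _ r1.
have qnz : q != 0 by apply: contraNneq nz => q0; rewrite Hq q0 mul0r.
apply: (IH q).
  move: Hs; rewrite Hq size_mul ?polyXsubC_eq0 // size_XsubC addn2 /=.
  done.
  done.
move: rz; rewrite Hq /root rmorphM rmorphB /= map_polyX map_polyC /= rmorph1 hornerM hornerXsubC mulf_eq0.
by rewrite subr_eq0 (negbTE a1) orbF.
Qed.

Lemma alg_pair : algebraic a -> a != 1 -> exists es ft : seq nat,
  \sum_(e <- es) a ^+ e = \sum_(e <- ft) a ^+ e /\ size es != size ft.
Proof.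
case=> p [pnz rp] a1.
have [q [c cnz Hp]] := rat_poly_scale p.
have qnz : q != 0 by apply: contraNneq pnz => q0; rewrite Hp q0 rmorph0 scaler0.
have rq : root (map_poly (intr : int -> R) q) a.
  move: rp; rewrite Hp /root map_polyZ hornerZ mulf_eq0 fmorph_eq0 invr_eq0 intr_eq0 (negbTE cnz) /=.
  by rewrite -map_poly_comp (eq_map_poly (ratr_int _)).
have [w [wnz [rw nr1]]] := @reduce a1 (size q) q (leqnn _) qnz rq.
have [es [ft [H1 H2]]] := int_split w.
exists es, ft; split.
  by apply/eqP; rewrite -subr_eq0 H1.
apply: contra nr1 => /eqP Hsz; rewrite /root -H2 Hsz subrr.
done.
Qed.


Lemma shift_sum k d (es : seq nat) :
  a ^- k * \sum_(e <- es) a ^+ e = a ^- (k + d) * \sum_(e <- map (addn d) es) a ^+ e.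
Proof. by rewrite -!sum_g -g_shift. Qed.

Lemma trans_atom n m : transcendental a -> is_atom L (a ^- n * a ^+ m).
Proof.
move=> tr; split; first exact: Lpow.
  by rewrite !mulf_neq0 ?invr_eq0 ?expf_neq0.
move=> y z [n1 [ys ->]] [n2 [zs ->]] H.
have H' := H; clear H.
rewrite -(big_seq1 GRing.add m (fun e => a ^+ e)) in H'.
rewrite (shift_sum n (n1 + n2)) (shift_sum n1 (n + n2)) (shift_sum n2 (n + n1)) in H'.
rewrite (_ : (n1 + (n + n2) = n + (n1 + n2))%N) in H'; last by lia.
rewrite (_ : (n2 + (n + n1) = n + (n1 + n2))%N) in H'; last by lia.
rewrite -mulrDr -big_cat in H'.
have nz : a ^- (n + (n1 + n2)) != 0 by rewrite invr_eq0 expf_neq0.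
move: (key _ _ tr (mulfI nz H')) => /perm_size; clear H'.
rewrite /= size_cat !size_map.
case: ys => [|y0 ys] /=; first by left; rewrite big_nil mulr0.
case: zs => [|z0 zs] /=; first by right; rewrite big_nil mulr0.
move=> /eqP; rewrite addSn addnS; done.
Qed.

End Aux.
Arguments L {R} a x.
Arguments g {R} a N e.
Arguments alg_pair {R a}.
Arguments atom_form {R a} ha {u}.
Arguments atom_scale {R a} ha p q {u}.
Arguments expVK {R a}.
Arguments sum_eq0 {R a} ha {es}.
Arguments rep {R a} ha {s}.
Arguments g_shift {R a}.
Arguments key {R a}.
Arguments trans_atom {R a}.
Arguments sum_g {R a}.

Lemma sum_nseq1 (R : realType) k : \sum_(u <- nseq k (1 : R)) u = k%:R.
Proof.
elim: k => [|k IH]; first by rewrite big_nil.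
by rewrite /= big_cons IH mulrS.
Qed.

Theorem proposition5p1 (R : realType) (a : R) (ha : 0 < a) :
  (UFM (M_alpha a) <-> HFM (M_alpha a)) /\
  (HFM (M_alpha a) <-> (a = 1 \/ transcendental a)).
Proof.
rewrite (@ML_eq R a).
have UH : UFM (L a) -> HFM (L a).
  case=> At u; split => // x s t Mx x0 fs ft; exact: perm_size (u x s t Mx x0 fs ft).
have HC : HFM (L a) -> a = 1 \/ transcendental a.
  move=> [At hf].
  have [->|a1] := eqVneq a 1; first by left.
  right => alg.
  have [es [ft [Heq Hsz]]] := alg_pair ha alg a1.
  have L1 : L a 1 by exists 0%N, [:: 0%N]; rewrite big_seq1 expr0 invr1 mulr1.
  have [s [sat ssum]] := At 1 L1 (oner_neq0 _).
  case: s sat ssum => [|u s] sat ssum.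
    by move: ssum; rewrite big_nil => /eqP; rewrite eq_sym oner_eq0.
  have Au := sat u (mem_head _ _).
  have [n [m Hu]] := atom_form ha Au.
  have A1 : is_atom (L a) 1.
    have := atom_scale ha m n Au.
    rewrite Hu (_ : a ^- m * a ^+ n * (a ^- n * a ^+ m) = (a ^- m * a ^+ m) * (a ^- n * a ^+ n)); last by ring.
    by rewrite !expVK ?mulr1.
  have Ae : forall e, is_atom (L a) (a ^+ e).
    by move=> e; have := atom_scale ha 0 e A1; rewrite expr0 invr1 mul1r mulr1.
  have fact : forall es0, is_factorization (L a) (\sum_(e <- es0) a ^+ e) (map (fun e => a ^+ e) es0).
    move=> es0; split; last by rewrite big_map.
    by move=> v /mapP [e _ ->]; exact: Ae.
  have x0 : \sum_(e <- es) a ^+ e != 0.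
    apply/eqP => H0; have E1 := sum_eq0 ha H0.
    have E2 : ft = [::] by apply: (sum_eq0 ha); rewrite -Heq.
    by move: Hsz; rewrite E1 E2.
  have Lx : L a (\sum_(e <- es) a ^+ e) by exists 0%N, es; rewrite expr0 invr1 mul1r.
  have F2 : is_factorization (L a) (\sum_(e <- es) a ^+ e) (map (fun e => a ^+ e) ft).
    by rewrite Heq; exact: fact.
  have := hf _ _ _ Lx x0 (fact es) F2; rewrite !size_map => E.
  by rewrite E eqxx in Hsz.
have CU : a = 1 \/ transcendental a -> UFM (L a).
  case=> [a1|tr].
    subst a.
    have Lnat : forall x : R, L (1:R) x -> exists k : nat, x = k%:R.
      move=> x [n [es ->]]; exists (size es); rewrite expr1n invr1 mul1r.
      elim: es => [|e es IH]; first by rewrite big_nil.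
      by rewrite big_cons IH expr1n /= mulrS.
    have atom1 : forall u : R, is_atom (L (1:R)) u -> u = 1.
      by move=> u /(atom_form ha) [n [m ->]]; rewrite !expr1n invr1 mulr1.
    have is1 : is_atom (L (1 : R)) 1.
      split; first by exists 0%N, [:: 0%N]; rewrite big_seq1 !expr0 invr1 mulr1.
        exact: oner_neq0.
      move=> y z /Lnat [k1 ->] /Lnat [k2 ->] /eqP; rewrite -natrD -[1]/(1%:R) eqr_nat => /eqP Hk.
      case: k1 Hk => [|k1] Hk; first by left.
      by right; have -> : k2 = 0%N by lia.
    split.
      move=> x /Lnat [k ->] _; exists (nseq k 1); split; last exact: sum_nseq1.
      by move=> v /nseqP [-> _]; exact: is1.
    move=> x s t Lx x0 [sa ss] [ta ts].
    have s1 : s = nseq (size s) 1.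
      by apply/all_pred1P/allP => v vs; apply/eqP; exact: atom1 (sa v vs).
    have t1 : t = nseq (size t) 1.
      by apply/all_pred1P/allP => v vs; apply/eqP; exact: atom1 (ta v vs).
    have Es : (size s)%:R = x :> R by rewrite -ss {2}s1 sum_nseq1.
    have Et : (size t)%:R = x :> R by rewrite -ts {2}t1 sum_nseq1.
    have Est : size s = size t by apply/eqP; rewrite -(eqr_nat R) Es Et.
    by rewrite s1 t1 Est.
  split.
    move=> x [n [es ->]] _; exists (map (g a n) es); split; last by rewrite sum_g.
    by move=> v /mapP [e _ ->]; exact: trans_atom.
  move=> x s t Lx x0 [sa ss] [ta ts].
  have [N1 [es Hs]] := rep ha (fun u us => atom_form ha (sa u us)).
  have [N2 [ft Ht]] := rep ha (fun u us => atom_form ha (ta u us)).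
  rewrite (g_shift ha N1 N2) in Hs; rewrite (g_shift ha N2 N1) (addnC N2 N1) in Ht.
  rewrite Hs Ht; apply: perm_map; apply: (key _ _ tr).
  have nz : a ^- (N1 + N2) != 0 by rewrite invr_eq0 expf_neq0 // gt_eqF.
  apply: (mulfI nz); rewrite -!sum_g -Hs -Ht ss ts //.
split; split.
- exact: UH.
- by move=> H; apply: CU; apply: HC.
- exact: HC.
- by move=> H; apply: UH; apply: CU.
Qed.
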